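(* For every $k\ge1$, $$B_k'=\{[f,l]\mid f\in B_k,\ l\in G_k\}=\{[l,f]\mid f\in B_k,\ l\in G_k\}.$$
   Context: Let $C_2=\{e,\sigma\}$ with $\sigma=(1,2)$. Define $B_1=C_2$ and $B_k=B_{k-1}\wr C_2$ for $k>1$, with elements written as wreath recursions $(g_1,g_2)\pi$, $g_1,g_2\in B_{k-1}$, $\pi\in C_2$, and multiplication $(g_1,g_2)\pi\cdot(h_1,h_2)\rho=(g_1h_{\pi(1)},g_2h_{\pi(2)})\pi\rho$. Define $G_1=\{e\}$ and, for $k>1$, $G_k=\{(g_1,g_2)\pi\in B_k : g_1g_2\in G_{k-1}\}$. The commutator is $[a,b]=aba^{-1}b^{-1}$. *)

(* Defs.v *)
(* B 0 is the trivial group, so B 1 = B 0 wr C_2 = C_2 (elements (tt,tt,pi)),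
   and B (k+1) = B k wr C_2. *)
Fixpoint B (k : nat) : Type :=
  match k with
  | O => unit
  | S k' => (B k' * B k' * bool)%type
  end.

Fixpoint one (k : nat) : B k :=
  match k return B k with
  | O => tt
  | S k' => (one k', one k', false)
  end.

Fixpoint mul (k : nat) : B k -> B k -> B k :=
  match k return B k -> B k -> B k with
  | O => fun _ _ => tt
  | S k' => fun x y =>
      match x, y with
      | (g1, g2, p), (h1, h2, r) =>
          (mul k' g1 (if p then h2 else h1),
           mul k' g2 (if p then h1 else h2),
           xorb p r)
      end
  end.

Fixpoint inv (k : nat) : B k -> B k :=
  match k return B k -> B k with
  | O => fun _ => tt
  | S k' => fun x =>
      match x with
      | (g1, g2, p) =>
          if p then (inv k' g2, inv k' g1, true)
          else (inv k' g1, inv k' g2, false)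
      end
  end.

Definition comm (k : nat) (a b : B k) : B k :=
  mul k (mul k (mul k a b) (inv k a)) (inv k b).

(* G_1 = {e};  G_k = {(g1,g2)pi | g1 g2 in G_{k-1}} for k > 1.
   (G 0 is never used by the statement.) *)
(* Gs k x  means  x in G_(k+1), for x : B (k+1). *)
Fixpoint Gs (k : nat) : B (S k) -> Prop :=
  match k return B (S k) -> Prop with
  | O => fun x => x = one 1
  | S k' => fun x =>
      match x with
      | (g1, g2, _) => Gs k' (mul (S k') g1 g2)
      end
  end.

Definition G (k : nat) : B k -> Prop :=
  match k return B k -> Prop with
  | O => fun _ => True
  | S k' => Gs k'
  end.

Inductive derived (k : nat) : B k -> Prop :=
  | derived_comm : forall a b, derived k (comm k a b)
  | derived_one : derived k (one k)
  | derived_mul : forall x y, derived k x -> derived k y -> derived k (mul k x y)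
  | derived_inv : forall x, derived k x -> derived k (inv k x).

(* Main.v *)
Require Import Defs.

Lemma mul_S k a1 a2 p b1 b2 r :
  mul (S k) (a1, a2, p) (b1, b2, r) =
  (mul k a1 (if p then b2 else b1), mul k a2 (if p then b1 else b2), xorb p r).
Proof. reflexivity. Qed.

Lemma inv_S k a1 a2 p :
  inv (S k) (a1, a2, p) =
  if p then (inv k a2, inv k a1, true) else (inv k a1, inv k a2, false).
Proof. reflexivity. Qed.

Lemma one_S k : one (S k) = (one k, one k, false).
Proof. reflexivity. Qed.

Lemma mul_assoc k : forall x y z : B k, mul k (mul k x y) z = mul k x (mul k y z).
Proof.
  induction k as [|k IH]; [intros; reflexivity|].
  intros [[x1 x2] p] [[y1 y2] r] [[z1 z2] s].
  rewrite !mul_S.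
  destruct p, r, s; simpl; rewrite ?mul_S, ?IH; reflexivity.
Qed.

Lemma mul_one_l k : forall x : B k, mul k (one k) x = x.
Proof.
  induction k as [|k IH]; [intros []; reflexivity|].
  intros [[x1 x2] p]. rewrite one_S, mul_S, !IH. reflexivity.
Qed.

Lemma mul_one_r k : forall x : B k, mul k x (one k) = x.
Proof.
  induction k as [|k IH]; [intros []; reflexivity|].
  intros [[x1 x2] p]. rewrite one_S, mul_S.
  destruct p; rewrite !IH; simpl; reflexivity.
Qed.

Lemma mul_inv_r k : forall x : B k, mul k x (inv k x) = one k.
Proof.
  induction k as [|k IH]; [intros; reflexivity|].
  intros [[x1 x2] p]. rewrite inv_S.
  destruct p; rewrite mul_S, !IH; reflexivity.
Qed.

Lemma mul_inv_l k : forall x : B k, mul k (inv k x) x = one k.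
Proof.
  induction k as [|k IH]; [intros; reflexivity|].
  intros [[x1 x2] p]. rewrite inv_S.
  destruct p; rewrite mul_S, !IH; reflexivity.
Qed.

Lemma inv_one k : inv k (one k) = one k.
Proof.
  induction k as [|k IH]; [reflexivity|]. rewrite one_S, inv_S, IH. reflexivity.
Qed.

Lemma inv_inv k : forall x : B k, inv k (inv k x) = x.
Proof.
  induction k as [|k IH]; [intros []; reflexivity|].
  intros [[x1 x2] p]. destruct p; rewrite !inv_S, !IH; reflexivity.
Qed.

Lemma inv_mul k : forall x y : B k, inv k (mul k x y) = mul k (inv k y) (inv k x).
Proof.
  induction k as [|k IH]; [intros; reflexivity|].
  intros [[x1 x2] p] [[y1 y2] r].
  destruct p, r; simpl; rewrite !IH; reflexivity.
Qed.

Lemma inv_comm k a b : inv k (comm k a b) = comm k b a.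
Proof.
  unfold comm. rewrite !inv_mul, !inv_inv, !mul_assoc. reflexivity.
Qed.

Fixpoint V (k : nat) : Type :=
  match k with O => unit | S k' => (V k' * bool)%type end.

Fixpoint vzero (k : nat) : V k :=
  match k return V k with O => tt | S k' => (vzero k', false) end.

Fixpoint vadd (k : nat) : V k -> V k -> V k :=
  match k return V k -> V k -> V k with
  | O => fun _ _ => tt
  | S k' => fun x y => (vadd k' (fst x) (fst y), xorb (snd x) (snd y))
  end.

Lemma vadd_comm k : forall x y : V k, vadd k x y = vadd k y x.
Proof.
  induction k as [|k IH]; [reflexivity|].
  intros [x p] [y r]; simpl; rewrite IH; destruct p, r; reflexivity.
Qed.

Lemma vadd_assoc k : forall x y z : V k, vadd k (vadd k x y) z = vadd k x (vadd k y z).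
Proof.
  induction k as [|k IH]; [reflexivity|].
  intros [x p] [y r] [z s]; simpl; rewrite IH; destruct p, r, s; reflexivity.
Qed.

Lemma vadd_0 k : forall x : V k, vadd k (vzero k) x = x.
Proof.
  induction k as [|k IH]; [intros []; reflexivity|].
  intros [x p]; simpl; rewrite IH; reflexivity.
Qed.

Lemma vadd_self k : forall x : V k, vadd k x x = vzero k.
Proof.
  induction k as [|k IH]; [reflexivity|].
  intros [x p]; simpl; rewrite IH; destruct p; reflexivity.
Qed.

Fixpoint ab (k : nat) : B k -> V k :=
  match k return B k -> V k with
  | O => fun _ => tt
  | S k' => fun x => match x with (g1, g2, p) => (vadd k' (ab k' g1) (ab k' g2), p) end
  end.

Lemma vadd_4 k a b c d :
  vadd k (vadd k a b) (vadd k c d) = vadd k (vadd k a c) (vadd k b d).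
Proof.
  rewrite !vadd_assoc. f_equal.
  rewrite <- !vadd_assoc, (vadd_comm k b c). reflexivity.
Qed.

Lemma ab_mul k : forall x y : B k, ab k (mul k x y) = vadd k (ab k x) (ab k y).
Proof.
  induction k as [|k IH]; [reflexivity|].
  intros [[x1 x2] p] [[y1 y2] r]. rewrite mul_S. simpl.
  rewrite !IH. destruct p; simpl; f_equal; rewrite vadd_4; [|reflexivity].
  f_equal. apply vadd_comm.
Qed.

Lemma ab_inv k : forall x : B k, ab k (inv k x) = ab k x.
Proof.
  induction k as [|k IH]; [reflexivity|].
  intros [[x1 x2] p]. destruct p; simpl; rewrite !IH; [rewrite vadd_comm|]; reflexivity.
Qed.

Lemma ab_one k : ab k (one k) = vzero k.
Proof.
  induction k as [|k IH]; [reflexivity|]. simpl. rewrite IH, vadd_self. reflexivity.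
Qed.

Lemma ab_comm k a b : ab k (comm k a b) = vzero k.
Proof.
  unfold comm. rewrite !ab_mul, !ab_inv.
  rewrite (vadd_comm k (vadd k (ab k a) (ab k b)) (ab k a)), <- (vadd_assoc k (ab k a)).
  rewrite !vadd_self, vadd_0, vadd_self. reflexivity.
Qed.

Lemma derived_ab k x : derived k x -> ab k x = vzero k.
Proof.
  induction 1.
  - apply ab_comm.
  - apply ab_one.
  - rewrite ab_mul, IHderived1, IHderived2, vadd_0. reflexivity.
  - rewrite ab_inv. assumption.
Qed.

Lemma ab_repr k : forall x : B (S k), ab (S k) x = vzero (S k) ->
  exists f l, G (S k) l /\ x = comm (S k) f l.
Proof.
  induction k as [|k IH].
  - intros [[[] []] p] H. simpl in H. inversion H; subst.
    exists (one 1), (one 1). split; reflexivity.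
  - intros [[g1 g2] p] H.
    change ((vadd (S k) (ab (S k) g1) (ab (S k) g2), p) = (vzero (S k), false)) in H. 
    assert (H1 : vadd (S k) (ab (S k) g1) (ab (S k) g2) = vzero (S k)) by exact (f_equal fst H).
    assert (H2 : p = false) by exact (f_equal snd H). subst p.
    rewrite <- ab_mul in H1.
    destruct (IH _ H1) as [f' [l' [Hl' Heq]]].
    exists (f', mul (S k) (inv (S k) g1) f', false), (one (S k), l', true).
    split.
    + simpl G. change (Gs k (mul (S k) (one (S k)) l')). rewrite mul_one_l. exact Hl'.
    + unfold comm. rewrite ?mul_S, ?inv_S, ?mul_S, ?inv_S, ?mul_S. simpl xorb.
      cbv iota. rewrite inv_one, !mul_one_r, inv_mul, inv_inv.
      apply (f_equal2 (fun a b => (a, b, false))).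
      * rewrite <- mul_assoc, mul_inv_r, mul_one_l. reflexivity.
      * rewrite !mul_assoc.
        assert (E : mul (S k) f' (mul (S k) l' (mul (S k) (inv (S k) f') (inv (S k) l')))
                    = mul (S k) g1 g2).
        { rewrite Heq. unfold comm. rewrite !mul_assoc. reflexivity. }
        rewrite E, <- mul_assoc, mul_inv_l, mul_one_l. reflexivity.
Qed.

Theorem mainTheorem14 (k : nat) (hk : 1 <= k) :
  (forall x : B k,
     derived k x <-> exists (f l : B k), G k l /\ x = comm k f l) /\
  (forall x : B k,
     derived k x <-> exists (f l : B k), G k l /\ x = comm k l f).
Proof.
  destruct k as [|k]; [inversion hk|].
  assert (A : forall x, derived (S k) x <-> exists f l, G (S k) l /\ x = comm (S k) f l).
  { intro x; split.
    - intro D. apply ab_repr, derived_ab, D.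
    - intros [f [l [_ ->]]]. apply derived_comm. }
  split; [exact A|].
  intro x; split.
  - intro D. destruct (proj1 (A _) (derived_inv _ _ D)) as [f [l [Hl E]]].
    exists f, l. split; [exact Hl|].
    rewrite <- inv_comm, <- E, inv_inv. reflexivity.
  - intros [f [l [_ ->]]]. apply derived_comm.
Qed.
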